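(* Let $\mathbb{X}$ be a reflexive Kadets-Klee real Banach space and $\mathbb{Y}$ any real Banach space (both of dimension greater than $1$). Let $T\in\mathbb{K}(\mathbb{X},\mathbb{Y})$ with $\|T\|=1$ and let $\epsilon>0$. Then $T$ is a uniform $\epsilon$-BPB approximation of itself. In particular, if $\mathbb{X}$ and $\mathbb{Y}$ are finite-dimensional, then every $T\in\mathbb{L}(\mathbb{X},\mathbb{Y})$ with $\|T\|=1$ has a uniform $\epsilon$-BPB approximation for every $\epsilon>0$.
   Context: $\mathbb{K}(\mathbb{X},\mathbb{Y})$ (resp. $\mathbb{L}(\mathbb{X},\mathbb{Y})$) denotes the compact (resp. bounded) linear operators with the operator norm; $S_{\mathbb{X}}$ is the unit sphere. $\mathbb{X}$ is Kadets-Klee if $x_n\to x$ weakly and $\|x_n\|\to\|x\|$ imply $\|x_n-x\|\to0$. For $T\in\mathbb{L}(\mathbb{X},\mathbb{Y})$ with $\|T\|=1$ and fixed $\epsilon>0$, an operator $A\in\mathbb{L}(\mathbb{X},\mathbb{Y})$ with $\|A\|=1$ is a uniform $\epsilon$-BPB approximation of $T$ if there exists $\delta(\epsilon)>0$ such that whenever $x_0\in S_{\mathbb{X}}$ satisfies $\|Tx_0\|>1-\delta(\epsilon)$, there exists $u_0\in S_{\mathbb{X}}$ with $\|Au_0\|=1$, $\|u_0-x_0\|<\epsilon$ and $\|A-T\|<\epsilon$. *)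

(* Defs.v *)
From HB Require Import structures.
From mathcomp Require Import all_boot all_order all_algebra.
From mathcomp Require Import all_classical all_reals all_analysis.
Set Implicit Arguments. Unset Strict Implicit. Unset Printing Implicit Defensive.
Import Order.TTheory GRing.Theory Num.Theory.
Import numFieldNormedType.Exports.
Local Open Scope classical_set_scope.
Local Open Scope ring_scope.

Section Defs.
Variable R : realType.

Definition bounded_op (X Y : normedModType R) (T : X -> Y) : Prop :=
  (forall x y, T (x + y) = T x + T y) /\
  (forall (a : R) x, T (a *: x) = a *: T x) /\
  continuous T.

Definition opnorm (X Y : normedModType R) (T : X -> Y) : R :=
  sup [set `|T x| | x in [set x : X | `|x| <= 1]].

Definition dual (X : normedModType R) : set (X -> R) :=
  [set f | bounded_op (f : X -> R^o)].

Definition weak_cvg (X : normedModType R) (u : nat -> X) (x : X) : Prop :=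
  forall f, dual f -> (fun n => f (u n)) @ \oo --> f x.

Definition kadets_klee (X : normedModType R) : Prop :=
  forall (u : nat -> X) (x : X), weak_cvg u x ->
    (fun n => `|u n|) @ \oo --> `|x| ->
    (fun n => `|u n - x|) @ \oo --> (0 : R).

(* reflexive: the canonical embedding X -> X^** is onto, i.e. every bounded
   linear functional Phi on the dual X^* (with its operator norm) is an
   evaluation functional f |-> f x. *)
Definition reflexive_space (X : normedModType R) : Prop :=
  forall Phi : (X -> R) -> R,
    (forall f g (a : R), dual f -> dual g ->
        Phi (fun x => a * f x + g x) = a * Phi f + Phi g) ->
    (exists C : R, forall f, dual f -> `|Phi f| <= C * opnorm (f : X -> R^o)) ->
    exists x : X, forall f, dual f -> Phi f = f x.

Definition dim_gt1 (X : normedModType R) : Prop :=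
  exists x y : X, forall a b : R, a *: x + b *: y = 0 -> a = 0 /\ b = 0.

Definition finite_dim (X : normedModType R) : Prop :=
  exists (n : nat) (v : 'I_n -> X),
    forall x : X, exists c : 'I_n -> R, x = \sum_(i < n) c i *: v i.

Definition compact_op (X Y : normedModType R) (T : X -> Y) : Prop :=
  bounded_op T /\ compact (closure (T @` [set x : X | `|x| <= 1])).

Definition uniform_BPB_approx (X Y : normedModType R) (T A : X -> Y) (eps : R)
  : Prop :=
  bounded_op A /\ opnorm A = 1 /\
  exists delta : R, 0 < delta /\
    forall x0 : X, `|x0| = 1 -> `|T x0| > 1 - delta ->
      exists u0 : X, `|u0| = 1 /\ `|A u0| = 1 /\ `|u0 - x0| < eps /\
        opnorm (fun x => A x - T x) < eps.

End Defs.

(* Main.v *)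
Require Import Defs.
From HB Require Import structures.
From mathcomp Require Import all_boot all_order all_algebra.
From mathcomp Require Import all_classical all_reals all_analysis.
From mathcomp Require Import ring lra.
Import Order.TTheory GRing.Theory Num.Theory.
Import numFieldNormedType.Exports.
Local Open Scope classical_set_scope.
Local Open Scope ring_scope.
Set Implicit Arguments. Unset Strict Implicit. Unset Printing Implicit Defensive.
Section Aux.
Variable R : realType.

Section Lin.
Variables (X Y : normedModType R) (T : X -> Y).
Hypothesis hT : bounded_op T.

Lemma bo_add x y : T (x + y) = T x + T y. Proof. by case: hT. Qed.
Lemma bo_scale a x : T (a *: x) = a *: T x. Proof. by case: hT => _ []. Qed.
Lemma bo_cont : continuous T. Proof. by case: hT => _ []. Qed.
Lemma bo0 : T 0 = 0.
Proof. by have := bo_scale 0 0; rewrite !scale0r. Qed.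
Lemma boN x : T (- x) = - T x.
Proof. by rewrite -scaleN1r bo_scale scaleN1r. Qed.
Lemma boB x y : T (x - y) = T x - T y.
Proof. by rewrite bo_add boN. Qed.

Lemma bo_bounded : exists M, 0 < M /\ forall x, `|T x| <= M * `|x|.
Proof.
have H : T x @[x --> (0:X)] --> (0:Y) by rewrite -bo0; exact: bo_cont.
move: H => /cvgrPdist_lt /(_ 1 ltr01).
rewrite nearE => /nbhs_ballP [r /= r0 Hr].
exists (2 / r); split; first by rewrite divr_gt0.
move=> x; have [->|x0] := eqVneq x 0.
  by rewrite bo0 !normr0 mulr0.
have nx : 0 < `|x| by rewrite normr_gt0.
pose k := r / 2 / `|x|.
have k0 : 0 < k by rewrite /k !divr_gt0.
have : ball (0:X) r (k *: x).
  rewrite -ball_normE /= sub0r normrN normrZ gtr0_norm // /k.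
  rewrite divfK ?gt_eqF //.
  by rewrite ltr_pdivrMr // ltr_pMr // ltr1n.
move/Hr; rewrite sub0r normrN bo_scale normrZ gtr0_norm // => H.
have -> : 2 / r * `|x| = k^-1 by rewrite /k; field; rewrite ?gt_eqF.
by rewrite -(ler_pM2l k0) mulfV ?gt_eqF // ltW.
Qed.

Definition ballset := [set `|T x| | x in [set x : X | `|x| <= 1]].

Lemma opnorm_has_sup : has_sup ballset.
Proof.
have [M [M0 HM]] := bo_bounded.
split; first by exists `|T 0|, 0 => //=; rewrite normr0.
exists M => _ [x /= x1 <-]; apply: (le_trans (HM x)).
by rewrite ler_piMr // ltW.
Qed.

Lemma opnorm_ge x : `|x| <= 1 -> `|T x| <= opnorm T.
Proof. by move=> x1; apply: sup_upper_bound opnorm_has_sup _ _; exists x. Qed.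

Lemma opnorm_ge0 : 0 <= opnorm T.
Proof. by apply: le_trans (opnorm_ge (x:=0) _); rewrite ?normr0 // normr_ge0. Qed.

Lemma opnorm_bound x : `|T x| <= opnorm T * `|x|.
Proof.
have [->|x0] := eqVneq x 0; first by rewrite bo0 !normr0 mulr0.
have nx : 0 < `|x| by rewrite normr_gt0.
have -> : x = `|x| *: (`|x|^-1 *: x) by rewrite scalerA mulfV ?gt_eqF ?scale1r.
rewrite bo_scale !normrZ gtr0_norm // mulrCA ler_pM2l //.
rewrite normfV normr_id mulVf ?gt_eqF // mulr1.
by apply: opnorm_ge; rewrite normrZ normfV normr_id mulVf ?gt_eqF.
Qed.

End Lin.
Section HahnBanach.
Variables (X : normedModType R) (p : X -> R).
Hypothesis pD : forall a b, p (a + b) <= p a + p b.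
Hypothesis pZ : forall (t : R) a, 0 <= t -> p (t *: a) = t * p a.
Variable z : X.

Let p0 : p 0 = 0.
Proof. by have := pZ 0 (le_refl 0); rewrite scale0r mul0r; apply. Qed.

Let pN a : 0 <= p a + p (- a).
Proof. by rewrite -p0 -(subrr a); apply: pD. Qed.

Let pge t x : t * p x <= p (t *: x).
Proof.
have [t0|t0] := leP 0 t; first by rewrite pZ.
have -> : t *: x = (- t) *: (- x) by rewrite scaleNr scalerN opprK.
rewrite pZ; last by rewrite oppr_ge0 ltW.
have := mulr_ge0 (ltW (ltac:(by rewrite oppr_gt0) : 0 < - t)) (pN x); rewrite mulrDr.
by move=> H; lra.
Qed.

Definition lgraph (G : set (X * R)) :=
  [/\ (forall x a b, G (x, a) -> G (x, b) -> a = b),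
      (forall x y a b, G (x, a) -> G (y, b) -> G (x + y, a + b)),
      (forall t x a, G (x, a) -> G (t *: x, t * a)) &
      (forall x a, G (x, a) -> a <= p x)].

Definition Pg G := lgraph G /\ (G !=set0 -> G (z, p z)).

Let G0 : set (X * R) := [set xa | exists t, xa = (t *: z, t * p z)].

Let PG0 : Pg G0.
Proof.
split; last by move=> _; exists 1; rewrite scale1r mul1r.
split.
- move=> x a b [t [-> ->]] [t' [e ->]].
  have [z0|z0] := eqVneq z 0; first by rewrite z0 p0 !mulr0.
  move/eqP: e; rewrite -subr_eq0 -scalerBl scaler_eq0 (negbTE z0) orbF subr_eq0.
  by move/eqP ->.
- move=> x y a b [t [-> ->]] [t' [-> ->]]; exists (t + t').
  by rewrite scalerDl mulrDl.
- move=> s x a [t [-> ->]]; exists (s * t); by rewrite scalerA mulrA.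
- by move=> x a [t [-> ->]]; apply: pge.
Qed.

Let chainP (F : set (set (X * R))) : F `<=` Pg -> total_on F subset ->
  Pg (\bigcup_(G in F) G).
Proof.
move=> FP Ftot; split; last first.
  move=> [[x a] [G FG Gxa]]; exists G => //; apply: (FP G FG).2; by exists (x, a).
have both : forall G1 G2 u v, F G1 -> F G2 -> G1 u -> G2 v ->
    exists2 G, F G & G u /\ G v.
  move=> G1 G2 u v F1 F2 H1 H2; have [S|S] := Ftot _ _ F1 F2.
    by exists G2 => //; split => //; apply: S.
  by exists G1 => //; split => //; apply: S.
split.
- move=> x a b [G1 F1 H1] [G2 F2 H2].
  have [G FG [Ha Hb]] := both _ _ _ _ F1 F2 H1 H2.
  by have [f _ _ _] := (FP G FG).1; apply: f Ha Hb.
- move=> x y a b [G1 F1 H1] [G2 F2 H2].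
  have [G FG [Ha Hb]] := both _ _ _ _ F1 F2 H1 H2.
  by exists G => //; have [_ f _ _] := (FP G FG).1; apply: f Ha Hb.
- move=> t x a [G FG H]; exists G => //.
  by have [_ _ f _] := (FP G FG).1; apply: f.
- move=> x a [G FG H].
  by have [_ _ _ f] := (FP G FG).1; apply: f H.
Qed.

Lemma hahn_banach : exists f : X -> R,
  [/\ (forall x y, f (x + y) = f x + f y), (forall a x, f (a *: x) = a * f x),
      (forall x, f x <= p x) & f z = p z].
Proof.
have [A [[[Af Aadd Ascal Adom] Az] Amax]] := Zorn_bigcup chainP.
have Ane : A !=set0.
  apply: contrapT => An; apply: (Amax G0) PG0; split; last first.
    move=> S; apply: An; exists (z, p z); apply: S.
    by exists 1; rewrite scale1r mul1r.
  by move=> u Au; exfalso; apply: An; exists u.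
have Azp := Az Ane.
have A00 : A (0, 0).
  by have := Ascal 0 _ _ Azp; rewrite scale0r mul0r.
have full : forall y, exists c, A (y, c).
  move=> y; apply: contrapT => ny.
  have ny' : forall c, ~ A (y, c) by move=> c Ac; apply: ny; exists c.
  pose L := [set r | exists x a, A (x, a) /\ r = a - p (x - y)].
  have Lne : L !=set0 by exists (p z - p (z - y)); exists z, (p z).
  have Lub : forall x' a', A (x', a') -> ubound L (p (x' + y) - a').
    move=> x' a' Ax' _ [x [a [Ax ->]]].
    have := Adom _ _ (Aadd _ _ _ _ Ax Ax').
    have := pD (x - y) (x' + y).
    have -> : x - y + (x' + y) = x + x' by rewrite addrACA addNr addr0.
    by move=> H1 H2; lra.
  have Lhs : has_sup L by split => //; exists (p (z + y) - p z); apply: Lub.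
  pose c := sup L.
  pose A' := [set xa | exists x a t, A (x, a) /\ xa = (x + t *: y, a + t * c)].
  apply: (Amax A'); last first.
    split; last by move=> _; exists z, (p z), 0; rewrite scale0r mul0r !addr0.
    split.
    - move=> x0 a0 b0 [x [a [t [Ax [e1 e2]]]]] [x' [a' [t' [Ax' [e1' e2']]]]].
      have [tt|tt] := eqVneq t t'.
        subst t'; move: e1'; rewrite e1 => /addIr exx; subst x'.
        by rewrite e2 e2' (Af _ _ _ Ax Ax').
      exfalso; apply: (ny' ((t' - t)^-1 * (a - a'))).
      have -> : y = (t' - t)^-1 *: (x - x').
        apply: (@scalerI _ _ (t' - t)); first by rewrite subr_eq0 eq_sym.
        rewrite scalerA mulfV ?scale1r; last by rewrite subr_eq0 eq_sym.
        have e : x + t *: y = x' + t' *: y by rewrite -e1 -e1'.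
        apply/eqP; rewrite scalerBl eq_sym subr_eq addrAC [t' *: y + x']addrC -e addrK.
        by [].
      apply: (Ascal); apply: Aadd Ax _.
      by have := Ascal (-1) _ _ Ax'; rewrite scaleN1r mulN1r.
    - move=> x0 y0 a0 b0 [x [a [t [Ax [-> ->]]]]] [x' [a' [t' [Ax' [-> ->]]]]].
      exists (x + x'), (a + a'), (t + t'); split; first exact: Aadd.
      by rewrite scalerDl mulrDl; congr (_, _); rewrite addrACA.
    - move=> s x0 a0 [x [a [t [Ax [-> ->]]]]].
      exists (s *: x), (s * a), (s * t); split; first exact: Ascal.
      by rewrite scalerDr scalerA mulrDr mulrA.
    - move=> x0 a0 [x [a [t [Ax [-> ->]]]]].
      have [t0|t0|->] := ltgtP t 0; last by rewrite scale0r mul0r !addr0; apply: Adom.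
      + pose s := - t; have s0 : 0 < s by rewrite oppr_gt0.
        have As := Ascal s^-1 _ _ Ax.
        have := sup_upper_bound Lhs; move=> /(_ (s^-1 * a - p (s^-1 *: x - y))).
        have H : L (s^-1 * a - p (s^-1 *: x - y)) by exists (s^-1 *: x), (s^-1 * a).
        move=> /(_ H) Hc.
        have -> : x + t *: y = s *: (s^-1 *: x - y).
          by rewrite scalerBr scalerA mulfV ?gt_eqF // scale1r /s scaleNr opprK.
        rewrite pZ; last exact: ltW.
        have -> : a + t * c = s * (s^-1 * a - c).
          by rewrite mulrBr mulrA mulfV ?gt_eqF // mul1r /s mulNr opprK.
        by move: Hc; rewrite /c => Hc; rewrite ler_pM2l //; lra.
      + have As := Ascal t^-1 _ _ Ax.
        have Hc : c <= p (t^-1 *: x + y) - t^-1 * a.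
          by apply: ge_sup => //; apply: Lub.
        have -> : x + t *: y = t *: (t^-1 *: x + y).
          by rewrite scalerDr scalerA mulfV ?gt_eqF // scale1r.
        rewrite pZ; last exact: ltW.
        have -> : a + t * c = t * (t^-1 * a + c).
          by rewrite mulrDr mulrA mulfV ?gt_eqF // mul1r.
        by move: Hc; rewrite /c => Hc; rewrite ler_pM2l //; lra.
  split.
    move=> [x a] Axa; exists x, a, 0; split => //.
    by rewrite scale0r mul0r !addr0.
  move=> S; apply: (ny' c); apply: S; exists 0, 0, 1; split => //.
  by rewrite scale1r mul1r !add0r.
have [f Hf] := choice full.
exists f; split.
- by move=> x y; apply: (Af _ _ _ (Hf (x + y))); apply: Aadd.
- by move=> a x; apply: (Af _ _ _ (Hf (a *: x))); apply: Ascal.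
- by move=> x; apply: Adom.
- exact: (Af _ _ _ (Hf z)).
Qed.

End HahnBanach.
Lemma dom_abs (X : normedModType R) (f : X -> R) (C : R) :
  (forall a x, f (a *: x) = a * f x) ->
  (forall x, f x <= C * `|x|) -> forall x, `|f x| <= C * `|x|.
Proof.
move=> fZ fC x; rewrite ler_norml fC andbT.
have := fC ((-1) *: x); rewrite fZ normrZ normrN1 mul1r => H; lra.
Qed.

Lemma lin_dual (X : normedModType R) (f : X -> R) (C : R) : 0 < C ->
  (forall x y, f (x + y) = f x + f y) -> (forall a x, f (a *: x) = a * f x) ->
  (forall x, f x <= C * `|x|) -> dual f.
Proof.
move=> C0 fD fZ fC; have fB := dom_abs fZ fC.
split; first exact: fD.
split; first exact: fZ.
move=> x; apply/cvgrPdist_lt => e e0; apply/nbhs_ballP.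
exists (e / C); first by rewrite /= divr_gt0.
move=> t; rewrite -ball_normE /= => H.
have -> : f x - f t = f (x - t).
  have fN : forall v, f (- v) = - f v by move=> v; rewrite -scaleN1r fZ mulN1r.
  by rewrite fD fN.
apply: le_lt_trans (fB _) _.
by move: H; rewrite ltr_pdivlMr // mulrC.
Qed.

Lemma norming (X : normedModType R) (z : X) :
  exists f : X -> R, [/\ dual f, f z = `|z| & forall x, `|f x| <= `|x|].
Proof.
have [|f [fD fZ fle fz]] := @hahn_banach X (fun x => `|x|) (@ler_normD _ _) _ z.
  by move=> t a t0; rewrite normrZ ger0_norm.
exists f; split => //.
  by apply: (lin_dual (C:=1)) => // x; rewrite mul1r.
by move=> x; rewrite -[`|x|]mul1r; apply: dom_abs fZ _ x => y; rewrite mul1r.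
Qed.

Lemma exists_ultra (J : set nat) : (forall N, exists j, (N <= j)%N /\ J j) ->
  exists U : set_system nat, [/\ UltraFilter U, \oo `<=` U & U J].
Proof.
move=> HJ.
pose F := filter_from setT (fun N => J `&` [set n | (N <= n)%N]).
have FF : ProperFilter F.
  apply: filter_from_proper; last first.
    by move=> N _; have [j [Nj Jj]] := HJ N; exists j.
  apply: filter_from_filter; first by exists 0%N.
  move=> i j _ _; exists (maxn i j) => // n [Jn /=]; rewrite geq_max => /andP[].
  by move=> *; split; split.
have [U [UU FU]] := ultraFilterLemma FF.
exists U; split => //.
  move=> A [N _ HA]; apply: FU; exists N => // n [_ Nn]; exact: HA.
by apply: FU; exists 0%N => // n [].
Qed.

Lemma ultra_fmap (T U : Type) (F : set_system T) (f : T -> U) :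
  UltraFilter F -> UltraFilter (f @ F).
Proof.
move=> FU; split; first exact: fmap_proper_filter.
move=> G GP sFG; rewrite predeqE => A; split; last exact: sFG.
move=> GA; have [//|FnA] := in_ultra_setVsetC (f @^-1` A) FU.
have GnA : G (~` A) by apply: sFG.
have : G (A `&` ~` A) by apply: filterI.
by rewrite setICr => /filter_ex [].
Qed.

Lemma ultra_lim (U : set_system nat) (a : nat -> R) (M : R) :
  UltraFilter U -> (forall n, `|a n| <= M) -> exists l : R, a @ U --> l.
Proof.
move=> UU aM.
have Fa : UltraFilter (a @ U) by exact: ultra_fmap.
have := segment_compact (a := - M) (b := M).
rewrite compact_ultra => /(_ _ Fa).
have : (a @ U) (`[- M, M]%classic : set R).
  suff : U (a @^-1` (`[- M, M]%classic : set R)) by [].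
  by apply: filterE => n /=; rewrite in_itv /= -ler_norml.
by move=> H /(_ H) [l [_ Hl]]; exists l.
Qed.

Lemma cvg_sub (T : topologicalType) (U : set_system nat) (a : nat -> T) (l : T) :
  \oo `<=` U -> a @ \oo --> l -> a @ U --> l.
Proof. by move=> sU H A /H; apply: sU. Qed.
Lemma lim_le (T : Type) (F : set_system T) (a : T -> R) (l M : R) :
  ProperFilter F -> a @ F --> l -> (forall t, `|a t| <= M) -> `|l| <= M.
Proof.
move=> PF al aM; rewrite leNgt; apply/negP => H.
have H0 : 0 < `|l| - M by rewrite subr_gt0.
move: (al) => /cvgrPdist_lt /(_ _ H0) /filter_ex [t Ht].
have := ler_normD (l - a t) (a t); rewrite subrK.
have := aM t; lra.
Qed.

Lemma cvg_uniqR (T : Type) (F : set_system T) (a : T -> R) (l l' : R) :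
  ProperFilter F -> a @ F --> l -> a @ F --> l' -> l = l'.
Proof. by move=> PF H1 H2; apply: (cvg_unique (@Rhausdorff R) H1 H2). Qed.

Lemma dual_comp (X Y : normedModType R) (T : X -> Y) (g : Y -> R) :
  bounded_op T -> dual g -> dual (fun x => g (T x)).
Proof.
move=> hT dg; split; first by move=> x y; rewrite (bo_add hT) (bo_add dg).
split; first by move=> a x; rewrite (bo_scale hT) (bo_scale dg).
move=> x; apply: (@continuous_comp _ _ _ T (g : Y -> R^o)).
  exact: (bo_cont hT).
exact: (bo_cont dg).
Qed.

Lemma dual_bound (X : normedModType R) (f : X -> R) :
  dual f -> forall x, `|f x| <= opnorm (f : X -> R^o) * `|x|.
Proof. by move=> df x; apply: (opnorm_bound df). Qed.

Lemma refl_ulim (X : normedModType R) (U : set_system nat) (u : nat -> X) :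
  reflexive_space X -> UltraFilter U -> (forall n, `|u n| <= 1) ->
  exists x : X, forall f, dual f -> (fun n => f (u n)) @ U --> f x.
Proof.
move=> Xr UU u1.
have fb : forall f, dual f -> forall n, `|f (u n)| <= opnorm (f : X -> R^o).
  move=> f df n; apply: le_trans (dual_bound df _) _.
  by rewrite ler_piMr ?u1 // (opnorm_ge0 df).
pose Phi (f : X -> R) : R := lim ((fun n => f (u n)) @ U).
have conv : forall f, dual f -> (fun n => f (u n)) @ U --> Phi f.
  move=> f df; have [l Hl] := ultra_lim UU (fb f df).
  by rewrite /Phi (cvg_lim (@Rhausdorff R) Hl).
have lin : forall f g (a : R), dual f -> dual g ->
    Phi (fun x => a * f x + g x) = a * Phi f + Phi g.
  move=> f g a df dg.
  have H : (fun n => a * f (u n) + g (u n)) @ U --> a * Phi f + Phi g.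
    exact: (cvgD (cvgMl_tmp (a:=a) (conv f df)) (conv g dg)).
  exact: (cvg_lim (@Rhausdorff R) H).
have bnd : exists C : R, forall f, dual f -> `|Phi f| <= C * opnorm (f : X -> R^o).
  exists 1 => f df; rewrite mul1r.
  exact: (lim_le (@ultra_proper _ _ UU) (conv f df) (fb f df)).
have [x Hx] := Xr Phi lin bnd.
by exists x => f df; rewrite -Hx //; apply: conv.
Qed.
Lemma opnorm_zero (X Y : normedModType R) (T : X -> Y) :
  opnorm (fun x => T x - T x) = 0.
Proof.
rewrite /opnorm (_ : [set _ | x in _] = [set 0]) ?sup1 //.
apply/seteqP; split => [_ [x _ <-]|_ ->] /=; first by rewrite subrr normr0.
by exists 0; rewrite /= ?normr0 ?subrr ?normr0 ?ler01.
Qed.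

Lemma eventually_inv_lt (c : R) : 0 < c -> \forall n \near \oo, n.+1%:R^-1 < c.
Proof.
move=> c0; apply: filterS (nbhs_infty_ger (c^-1)) => n H.
rewrite invf_plt ?posrE ?ltr0Sn //.
by apply: le_lt_trans H _; rewrite ltr_nat.
Qed.

Definition seqQ (X Y : normedModType R) (T : X -> Y) (eps : R) :=
  forall x : nat -> X, (forall n, `|x n| = 1) ->
    (forall n, 1 - n.+1%:R^-1 < `|T (x n)|) ->
    exists u, [/\ `|u| = 1, `|T u| = 1 & exists n, `|u - x n| < eps].

Lemma BPB_reduce (X Y : normedModType R) (T : X -> Y) (eps : R) :
  bounded_op T -> opnorm T = 1 -> 0 < eps -> seqQ T eps ->
  uniform_BPB_approx T T eps.
Proof.
move=> hT nT e0 HQ; split => //; split => //.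
apply: contrapT => nH.
have bad : forall n : nat, exists x0 : X, [/\ `|x0| = 1,
    1 - n.+1%:R^-1 < `|T x0| &
    forall u, `|u| = 1 -> `|T u| = 1 -> eps <= `|u - x0|].
  move=> n; apply: contrapT => nx; apply: nH; exists n.+1%:R^-1.
  split; first by rewrite invr_gt0.
  move=> x0 x01 Tx0; apply: contrapT => nu; apply: nx; exists x0; split => //.
  move=> u u1 Tu1; rewrite leNgt; apply/negP => ue; apply: nu.
  by exists u; split => //; split => //; split => //; rewrite opnorm_zero.
have [x Hx] := choice bad.
have x1 : forall n, `|x n| = 1 by move=> n; case: (Hx n).
have Tx : forall n, 1 - n.+1%:R^-1 < `|T (x n)| by move=> n; case: (Hx n).
have [u [u1 Tu1 [n un]]] := HQ x x1 Tx.
case: (Hx n) => _ _ /(_ u u1 Tu1).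
by rewrite leNgt un.
Qed.
Section Span.
Variables (X : normedModType R) (x : nat -> X).

Definition spanS : set X :=
  [set v | exists m (c : nat -> R), v = \sum_(i < m) c i *: x i].

Lemma sum_widen m1 m (c : nat -> R) : (m1 <= m)%N ->
  \sum_(i < m1) c i *: x i = \sum_(i < m) (if (i < m1)%N then c i else 0) *: x i.
Proof.
move=> H; rewrite (big_ord_widen m (fun i => c i *: x i) H) big_mkcond.
by apply: eq_bigr => i _; case: ifP => _; rewrite ?scale0r.
Qed.

Lemma spanS0 : spanS 0.
Proof. by exists 0%N, (fun _ => 0); rewrite big_ord0. Qed.

Lemma spanSD a b : spanS a -> spanS b -> spanS (a + b).
Proof.
move=> [m1 [c1 ->]] [m2 [c2 ->]].
exists (maxn m1 m2), (fun i => (if (i < m1)%N then c1 i else 0) +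
                              (if (i < m2)%N then c2 i else 0)).
rewrite (sum_widen c1 (leq_maxl m1 m2)) (sum_widen c2 (leq_maxr m1 m2)).
by rewrite -big_split; apply: eq_bigr => i _; rewrite scalerDl.
Qed.

Lemma spanSZ t a : spanS a -> spanS (t *: a).
Proof.
move=> [m [c ->]]; exists m, (fun i => t * c i); rewrite scaler_sumr.
by apply: eq_bigr => i _; rewrite scalerA.
Qed.

Lemma spanS_x n : spanS (x n).
Proof.
exists n.+1, (fun i => if i == n then 1 else 0).
rewrite big_ord_recr /= eqxx scale1r big1 ?add0r // => i _.
by rewrite ltn_eqF ?scale0r.
Qed.

Definition distS (v : X) : R := inf [set `|v - s| | s in spanS].

Lemma distS_lb v : has_lbound [set `|v - s| | s in spanS].
Proof. by exists 0 => _ [s _ <-]; exact: normr_ge0. Qed.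

Lemma distS_ne v : [set `|v - s| | s in spanS] !=set0.
Proof. by exists `|v - 0|, 0 => //; exact: spanS0. Qed.

Lemma distS_le v s : spanS s -> distS v <= `|v - s|.
Proof. by move=> Ss; rewrite /distS; apply: (ge_inf (distS_lb v)); exists s. Qed.

Lemma distS_ge0 v : 0 <= distS v.
Proof. by apply: lb_le_inf (distS_ne v) _ => _ [s _ <-]. Qed.

Lemma distS_norm v : distS v <= `|v|.
Proof. by have := distS_le v spanS0; rewrite subr0. Qed.

Lemma distS_S s : spanS s -> distS s = 0.
Proof.
move=> Ss; apply/le_anti/andP; split; last exact: distS_ge0.
by have := distS_le s Ss; rewrite subrr normr0.
Qed.

Lemma distSD a b : distS (a + b) <= distS a + distS b.
Proof.
have H1 : forall s1 s2, spanS s1 -> spanS s2 ->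
    distS (a + b) <= `|a - s1| + `|b - s2|.
  move=> s1 s2 S1 S2; apply: le_trans (distS_le _ (spanSD S1 S2)) _.
  have -> : a + b - (s1 + s2) = (a - s1) + (b - s2) by rewrite opprD addrACA.
  exact: ler_normD.
have H2 : forall s2, spanS s2 -> distS (a + b) - `|b - s2| <= distS a.
  move=> s2 S2; apply: lb_le_inf (distS_ne a) _ => _ [s1 S1 <-].
  by have := H1 _ _ S1 S2; lra.
have : distS (a + b) - distS a <= distS b.
  apply: lb_le_inf (distS_ne b) _ => _ [s2 S2 <-]; have := H2 _ S2; lra.
lra.
Qed.

Lemma distSZ t a : 0 <= t -> distS (t *: a) = t * distS a.
Proof.
move=> t0; have [->|tp] := eqVneq t 0.
  by rewrite scale0r mul0r distS_S //; exact: spanS0.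
have tg : 0 < t by rewrite lt_def tp t0.
apply/le_anti/andP; split.
- have H : forall s, spanS s -> distS (t *: a) * t^-1 <= `|a - s|.
    move=> s Ss; have := distS_le (t *: a) (spanSZ t Ss).
    rewrite -scalerBr normrZ gtr0_norm // => H.
    by rewrite ler_pdivrMr // mulrC.
  have := lb_le_inf (distS_ne a) (x := distS (t *: a) * t^-1).
  move=> /(_ _) H'.
  have : distS (t *: a) * t^-1 <= distS a.
    by apply: H' => _ [s Ss <-]; apply: H.
  by rewrite ler_pdivrMr // mulrC.
- apply: lb_le_inf (distS_ne _) _ => _ [s Ss <-].
  have := distS_le a (spanSZ t^-1 Ss).
  have -> : a - t^-1 *: s = t^-1 *: (t *: a - s).
    by rewrite scalerBr scalerA mulVf ?scale1r.
  rewrite normrZ gtr0_norm ?invr_gt0 // => H.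
  by rewrite -(ler_pM2l tg) mulrA mulfV ?mul1r in H.
Qed.

Definition Dq (k : nat) : X :=
  match (unpickle k : option (seq rat)) with
  | Some s => \sum_(i < size s) (ratr (nth 0 s i) : R) *: x i
  | None => 0
  end.

Lemma Dq_S k : spanS (Dq k).
Proof.
rewrite /Dq; case: (unpickle k) => [s|]; last exact: spanS0.
by exists (size s), (fun i => ratr (nth 0 s i)).
Qed.

Lemma Dq_dense : (forall n, `|x n| <= 1) ->
  forall s e, spanS s -> 0 < e -> exists k, `|s - Dq k| < e.
Proof.
move=> x1 _ e [m [c ->]] e0.
have em : 0 < e / m.+1%:R by rewrite divr_gt0.
have Hq0 : forall i, exists qi : rat, `|c i - ratr qi| < e / m.+1%:R.
  move=> i.
  have aux1 : forall (a d : R), 0 < d -> a - d < a + d by move=> a d d0; lra.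
  have aux2 : forall a b d : R, a - d < b -> b < a + d -> `|a - b| < d.
    by move=> a b d h1 h2; rewrite ltr_norml; apply/andP; split; lra.
  have [|r] := @rat_in_itvoo R (c i - e / m.+1%:R) (c i + e / m.+1%:R).
    exact: aux1.
  by rewrite in_itv /= => /andP [h1 h2]; exists r; apply: aux2.
have [q Hq] := choice Hq0.
exists (pickle (mkseq q m)); rewrite /Dq pickleK size_mkseq.
rewrite -sumrB.
have -> : \sum_(i < m) (c i *: x i - (ratr (nth 0 (mkseq q m) i) : R) *: x i)
   = \sum_(i < m) (c i - ratr (q i)) *: x i.
  by apply: eq_bigr => i _; rewrite nth_mkseq // scalerBl.
apply: le_lt_trans (ler_norm_sum _ _ _) _.
have Hb : \sum_(i < m) `|(c i - ratr (q i)) *: x i| <= \sum_(i < m) (e / m.+1%:R).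
  apply: ler_sum => i _; rewrite normrZ.
  apply: le_trans (ltW (Hq i)); apply: ler_piMr => //.
apply: le_lt_trans Hb _.
rewrite sumr_const card_ord.
rewrite ?mul1r -[_ *+ m]mulr_natr -mulrA gtr_pMr // mulrC ltr_pdivrMr ?ltr0Sn // mul1r ltr_nat.
by [].
Qed.

Lemma sep_zero (G : nat -> X -> R) : (forall n, `|x n| <= 1) ->
  (forall k, [/\ dual (G k), G k (Dq k) = `|Dq k| & forall v, `|G k v| <= `|v|]) ->
  forall w, distS w = 0 -> (forall k, G k w = 0) -> w = 0.
Proof.
move=> x1 HG w dw Gw; apply/eqP; rewrite -normr_eq0; apply/eqP.
apply/le_anti/andP; split; last exact: normr_ge0.
rewrite leNgt; apply/negP => wp.
pose e := `|w| / 4.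
have e0 : 0 < e by rewrite divr_gt0.
have he : 4 * e = `|w| by rewrite /e mulrC divfK.
have [_ [s Ss <-] ws] : exists2 r, [set `|w - s| | s in spanS] r & r < e.
  by apply: inf_lt (distS_ne w) _; rewrite -/(distS w) dw.
have [k Hk] := Dq_dense x1 Ss e0.
have [dG GD Gn] := HG k.
have Hwk : `|w - Dq k| < 2 * e.
  have := ler_normD (w - s) (s - Dq k); rewrite addrA subrK; lra.
have HD : `|Dq k| < 2 * e.
  rewrite -GD.
  have -> : G k (Dq k) = G k (Dq k - w) + G k w.
    by rewrite -(bo_add dG) subrK.
  rewrite Gw addr0; apply: le_lt_trans (ler_norm _) _.
  by apply: le_lt_trans (Gn _) _; rewrite distrC.
have := ler_normD (w - Dq k) (Dq k); rewrite subrK; lra.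
Qed.

End Span.
Lemma part1 (X Y : normedModType R) (T : X -> Y) (eps : R) :
  reflexive_space X -> kadets_klee X -> compact_op T -> opnorm T = 1 ->
  0 < eps -> seqQ T eps.
Proof.
move=> Xr Xkk [hT Tc] nT e0 x x1 Tx.
have x1' : forall n, `|x n| <= 1 by move=> n; rewrite x1.
have [U [UU sU _]] := @exists_ultra setT (fun N => ex_intro _ N (conj (leqnn N) I)).
have PU : ProperFilter U := @ultra_proper _ _ UU.
have FU : Filter U := PU.
have [xw Hxw] := refl_ulim Xr UU x1'.
have Txle : forall n, `|T (x n)| <= 1.
  by move=> n; rewrite -nT -(mulr1 (opnorm T)) -(x1 n); exact: opnorm_bound.
have [y [Ky Hy]] : exists y, closure (T @` [set v | `|v| <= 1]) y /\
    (fun n => T (x n)) @ U --> y.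
  have := Tc; rewrite compact_ultra => /(_ _ (ultra_fmap (fun n => T (x n)) UU)).
  have H : ((fun n => T (x n)) @ U) (closure (T @` [set v : X | `|v| <= 1])).
    suff : U ((fun n => T (x n)) @^-1` closure (T @` [set v : X | `|v| <= 1])) by [].
    apply: filterE => n /=; apply: subset_closure; exists (x n) => //=.
  by move=> /(_ H) [y [Ky Hy]]; exists y.
have ny : `|y| = 1.
  apply/le_anti/andP; split.
    have := lim_le PU (@cvg_norm _ _ _ _ FU _ _ Hy) (M := 1); rewrite normr_id; apply => n; rewrite normr_id; exact: Txle.
  rewrite leNgt; apply/negP => ylt.
  pose c := (1 - `|y|) / 2.
  have c0 : 0 < c by rewrite /c divr_gt0 // subr_gt0.
  have hc : c * 2 = 1 - `|y| by rewrite /c divfK // pnatr_eq0.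
  have := @cvg_norm _ _ _ _ FU _ _ Hy; move=> /cvgrPdist_lt /(_ _ c0) H1.
  have H2 : U (fun n => n.+1%:R^-1 < c) := sU _ (eventually_inv_lt c0).
  have [n [h1 h2]] := filter_ex (filterI H1 H2).
  move: h1; rewrite ltr_norml => /andP [h1 h1'].
  have aux : forall a b cc i : R, i < cc -> cc * 2 = 1 - b -> 1 - i < a ->
    - cc < b - a -> False by move=> a b cc i; lra.
  exact: aux h2 hc (Tx n) h1.
have Tw : T xw = y.
  have [g [dg gz gn]] := norming (y - T xw).
  have c1 : (fun n => g (T (x n))) @ U --> g (T xw) := Hxw _ (dual_comp hT dg).
  have c2 : (fun n => g (T (x n))) @ U --> g y.
    exact: (continuous_cvg _ (@bo_cont _ _ _ dg y) Hy).
  have e := cvg_uniqR PU c1 c2.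
  have : `|y - T xw| = 0 by rewrite -gz (boB dg) e subrr.
  by move/eqP; rewrite normr_eq0 subr_eq0 => /eqP.
have nTw : `|T xw| = 1 by rewrite Tw.
have nxw : `|xw| = 1.
  apply/le_anti/andP; split.
    have [h [dh hz hn]] := norming xw.
    rewrite -hz; apply: le_trans (ler_norm _) _.
    apply: (lim_le PU (Hxw _ dh)) => n.
    by apply: le_trans (hn _) _; rewrite x1.
  by rewrite -nTw -[`|xw|]mul1r -nT; apply: opnorm_bound.
have [G HG] := choice (fun k => norming (Dq x k)).
have sep := sep_zero x1' HG.
have Hk : forall k, (fun n => G k (x n)) @ U --> G k xw.
  by move=> k; apply: Hxw; case: (HG k).
have Aj : forall j, exists n, forall k, (k <= j)%N ->
    `|G k xw - G k (x n)| < j.+1%:R^-1.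
  move=> j; suff : U [set n | forall k, (k <= j)%N ->
      `|G k xw - G k (x n)| < j.+1%:R^-1].
    by move/filter_ex => [n Hn]; exists n.
  have ej : 0 < j.+1%:R^-1 :> R by rewrite invr_gt0.
  have Bk : forall k, U [set n | `|G k xw - G k (x n)| < j.+1%:R^-1].
    by move=> k; move: (Hk k) => /cvgrPdist_lt /(_ _ ej).
  have : forall m, U [set n | forall k, (k < m)%N ->
      `|G k xw - G k (x n)| < j.+1%:R^-1].
    elim=> [|m IH]; first by apply: filterE => n k.
    apply: filterS (filterI IH (Bk m)) => n [H1 H2] k.
    by rewrite ltnS leq_eqVlt => /orP [/eqP -> //|]; exact: H1.
  by move/(_ j.+1).
have [ns Hns] := choice Aj.
have Gcv : forall k, (fun j => G k (x (ns j))) @ \oo --> G k xw.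
  move=> k; apply/cvgrPdist_lt => e e1.
  apply: filterS (filterI (nbhs_infty_ge k) (eventually_inv_lt e1)) => j [kj je].
  exact: lt_trans (Hns j k kj) je.
have wk : weak_cvg (fun j => x (ns j)) xw.
  move=> f df; apply: contrapT => nf.
  have [e [e1 He]] : exists e, 0 < e /\ forall N, exists j,
      (N <= j)%N /\ e <= `|f xw - f (x (ns j))|.
    apply: contrapT => nE; apply: nf; apply/cvgrPdist_lt => e e1.
    apply: contrapT => nev.
    apply: nE; exists e; split => // N; apply: contrapT => nj.
    apply: nev; exists N => // j /= Nj.
    by rewrite ltNge; apply/negP => H; apply: nj; exists j.
  have [U' [UU' sU' UJ]] := @exists_ultra
     (fun j => e <= `|f xw - f (x (ns j))|) He.
  have PU' : ProperFilter U' := @ultra_proper _ _ UU'.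
  have FU' : Filter U' := PU'.
  have [x' Hx'] := refl_ulim Xr UU' (fun j => x1' (ns j)).
  have Gx' : forall k, G k x' = G k xw.
    move=> k; apply: (cvg_uniqR PU' (Hx' _ _)); first by case: (HG k).
    exact: cvg_sub sU' (Gcv k).
  have dw : distS x (xw - x') = 0.
    have [h [hD hZ hle hw]] := hahn_banach (@distSD _ x) (@distSZ _ x) (xw - x').
    have dh : dual h.
      apply: (@lin_dual _ h 1) => // v; rewrite mul1r.
      exact: le_trans (hle v) (distS_norm _ _).
    have hS : forall s, spanS x s -> h s = 0.
      move=> s Ss; apply/le_anti/andP; split.
        by rewrite -(distS_S Ss); apply: hle.
      have := hle (- s); rewrite -scaleN1r (distS_S (spanSZ (-1) Ss)) scaleN1r.
      by rewrite (boN dh) oppr_le0.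
    have h0 : (fun n => h (x n)) = (fun _ => 0).
      by apply: funext => n; apply: hS; apply: spanS_x.
    have hxw : h xw = 0.
      apply: (cvg_uniqR PU (Hxw _ dh)); rewrite h0; exact: cvg_cst.
    have hx' : h x' = 0.
      apply: (cvg_uniqR PU' (Hx' _ dh)).
      have -> : (fun j => h (x (ns j))) = (fun _ => 0).
        by apply: funext => j; apply: hS; apply: spanS_x.
      exact: cvg_cst.
    by rewrite -hw (boB dh) hxw hx' subrr.
  have w0 : xw - x' = 0.
    apply: (sep _ dw) => k.
    by case: (HG k) => dG _ _; rewrite (boB dG) Gx' subrr.
  have exx : xw = x' by apply/eqP; rewrite -subr_eq0 w0.
  have : e <= `|f xw - f x'|.
    rewrite leNgt; apply/negP => H.
    have d0 : 0 < e - `|f xw - f x'| by rewrite subr_gt0.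
    move: (Hx' _ df) => /cvgrPdist_lt /(_ _ d0) H1.
    have [j [h1 h2]] := filter_ex (filterI H1 UJ).
    have := ler_normD (f xw - f x') (f x' - f (x (ns j))).
    rewrite addrA subrK; lra.
  by rewrite exx subrr normr0 => /(lt_le_trans e1); rewrite ltxx.
have hn : (fun j => `|x (ns j)|) @ \oo --> `|xw|.
  have -> : (fun j => `|x (ns j)|) = (fun _ => 1) by apply: funext => j; rewrite x1.
  by rewrite nxw; exact: cvg_cst.
have := Xkk _ _ wk hn; move=> /cvgrPdist_lt /(_ _ e0) /filter_ex [j Hj].
exists xw; split => //; exists (ns j).
by move: Hj; rewrite sub0r normrN normr_id distrC.
Qed.
Lemma cvg_sumI (X : normedModType R) (T : Type) (F : set_system T) (FF : Filter F)
  n (f : 'I_n -> T -> X) (a : 'I_n -> X) :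
  (forall i, f i @ F --> a i) ->
  (fun t => \sum_(i < n) f i t) @ F --> \sum_(i < n) a i.
Proof.
elim: n f a => [|n IH] f a Hf.
  rewrite big_ord0 (_ : (fun t => _) = (fun _ => 0)); first exact: cvg_cst.
  by apply: funext => t; rewrite big_ord0.
rewrite big_ord_recr (_ : (fun t => _) = (fun t =>
    \sum_(i < n) f (widen_ord (leqnSn n) i) t + f ord_max t)).
  exact: (cvgD (IH _ _ (fun i => Hf _)) (Hf ord_max)).
by apply: funext => t; rewrite big_ord_recr.
Qed.

Lemma sum_abs_le n (c : 'I_n -> R) i : `|c i| <= \sum_(j < n) `|c j|.
Proof. by rewrite (bigD1 i) //= lerDl sumr_ge0. Qed.

Lemma indep_lb (X : normedModType R) n (v : 'I_n -> X) :
  (forall c : 'I_n -> R, \sum_(i < n) c i *: v i = 0 -> forall i, c i = 0) ->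
  exists m, 0 < m /\ forall c : 'I_n -> R, \sum_(i < n) `|c i| = 1 ->
    m <= `|\sum_(i < n) c i *: v i|.
Proof.
move=> ind; apply: contrapT => nm.
have Hk : forall k : nat, exists c : 'I_n -> R,
    \sum_(i < n) `|c i| = 1 /\ `|\sum_(i < n) c i *: v i| < k.+1%:R^-1.
  move=> k; apply: contrapT => nc; apply: nm; exists k.+1%:R^-1.
  split; first by rewrite invr_gt0.
  move=> c c1; rewrite leNgt; apply/negP => H; apply: nc; by exists c.
have [c Hc] := choice Hk.
have [U [UU sU _]] := @exists_ultra setT (fun N => ex_intro _ N (conj (leqnn N) I)).
have PU : ProperFilter U := @ultra_proper _ _ UU.
have FU : Filter U := PU.
have Hl : forall i, exists l : R, (fun k => c k i) @ U --> l.
  move=> i; apply: (ultra_lim (M := 1) UU) => k.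
  by have [c1 _] := Hc k; rewrite -c1 sum_abs_le.
have [l Hl'] := choice Hl.
have s1 : \sum_(i < n) `|l i| = 1.
  have H1 : (fun k => \sum_(i < n) `|c k i|) @ U --> \sum_(i < n) `|l i|.
    exact: (cvg_sumI FU (fun i => @cvg_norm _ _ _ _ FU _ _ (Hl' i))).
  have E : (fun k => \sum_(i < n) `|c k i|) = (fun _ => 1).
    by apply: funext => k; case: (Hc k).
  rewrite E in H1; apply: (cvg_uniqR PU H1); exact: cvg_cst.
have s0 : \sum_(i < n) l i *: v i = 0.
  have H1 : (fun k => \sum_(i < n) c k i *: v i) @ U --> \sum_(i < n) l i *: v i.
    exact: (cvg_sumI FU (fun i => cvgZ (Hl' i) (cvg_cst (v i)))).
  have H2 : (fun k => `|\sum_(i < n) c k i *: v i|) @ U --> (0 : R).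
    apply: cvg_sub sU _; apply/cvgrPdist_lt => e e1.
    apply: filterS (eventually_inv_lt e1) => k hk.
    rewrite sub0r normrN normr_id; exact: lt_trans (Hc k).2 hk.
  have := cvg_uniqR PU (@cvg_norm _ _ _ _ FU _ _ H1) H2.
  by move/eqP; rewrite normr_eq0 => /eqP.
have : \sum_(i < n) `|l i| = 0.
  by apply: big1 => i _; rewrite (ind _ s0 i) normr0.
by rewrite s1 => /eqP; rewrite oner_eq0.
Qed.

Lemma fd_coord (X : normedModType R) n (v : 'I_n -> X) : exists C, 0 <= C /\
  forall c : 'I_n -> R, exists c' : 'I_n -> R,
    \sum_(i < n) c' i *: v i = \sum_(i < n) c i *: v i /\
    forall i, `|c' i| <= C * `|\sum_(i < n) c i *: v i|.
Proof.
elim: n v => [|n IH] v.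
  by exists 0; split => // c; exists c; split => // [[]].
have [ind|dep] := pselect (forall c : 'I_n.+1 -> R,
    \sum_(i < n.+1) c i *: v i = 0 -> forall i, c i = 0).
- have [m [m0 Hm]] := indep_lb ind.
  exists m^-1; split; first by rewrite invr_ge0 ltW.
  move=> c; exists c; split => // i.
  pose S := \sum_(j < n.+1) `|c j|.
  have ci : `|c i| <= S by rewrite /S sum_abs_le.
  have S0 : 0 <= S by rewrite /S sumr_ge0.
  have [Se|Sp] := eqVneq S 0.
    rewrite Se in ci; apply: le_trans ci _.
    by rewrite mulr_ge0 // invr_ge0 ltW.
  have Sg : 0 < S by rewrite lt_def Sp S0.
  have := Hm (fun j => S^-1 * c j).
  have -> : \sum_(j < n.+1) (S^-1 * c j) *: v j = S^-1 *: \sum_(j < n.+1) c j *: v j.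
    by rewrite scaler_sumr; apply: eq_bigr => j _; rewrite scalerA.
  rewrite normrZ ger0_norm ?invr_ge0 //.
  have -> : \sum_(j < n.+1) `|S^-1 * c j| = S^-1 * S.
    rewrite /S mulr_sumr; apply: eq_bigr => j _.
    by rewrite normrM ger0_norm ?invr_ge0.
  rewrite mulVf // => /(_ erefl) H.
  apply: le_trans ci _.
  rewrite -(ler_pM2l m0) mulVKf ?gt_eqF //.
  by have := ler_wpM2l (ltW Sg) H; rewrite mulVKf ?gt_eqF // mulrC.
- move/existsNP: dep => [d /not_implyP [hd /existsNP [i0 di0]]].
  have [C [C0 HC]] := IH (fun j => v (lift i0 j)).
  exists C; split => // c.
  pose e j := c (lift i0 j) - c i0 * (d (lift i0 j) / d i0).
  have se : \sum_(j < n) e j *: v (lift i0 j) = \sum_(i < n.+1) c i *: v i.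
    move: hd; rewrite !(bigD1_ord i0) //= => hd.
    set A := \sum_(j < n) c (lift i0 j) *: v (lift i0 j).
    set B := \sum_(j < n) d (lift i0 j) *: v (lift i0 j) in hd.
    have eB : B = - (d i0 *: v i0).
      by apply/eqP; rewrite -addr_eq0 addrC hd.
    have -> : \sum_(j < n) e j *: v (lift i0 j) = A - (c i0 / d i0) *: B.
      rewrite /A /B /e scaler_sumr -sumrB; apply: eq_bigr => j _.
      rewrite scalerBl scalerA; congr (_ - _ *: _); ring.
    rewrite eB scalerN opprK scalerA divfK; last by apply/eqP.
    by rewrite addrC.
  have [e' [Se' He']] := HC e.
  exists (fun i => if unlift i0 i is Some j then e' j else 0); split.
    rewrite (bigD1_ord i0) //= unlift_none scale0r add0r.
    rewrite (eq_bigr (fun j => e' j *: v (lift i0 j))); last first.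
      by move=> j _; rewrite liftK.
    by rewrite Se' se.
  move=> i; case: (unlift i0 i) => [j|]; first by rewrite -se; apply: He'.
  by rewrite normr0 mulr_ge0.
Qed.
Lemma fd_ulim (X : normedModType R) (U : set_system nat) (u : nat -> X) :
  finite_dim X -> UltraFilter U -> (forall n, `|u n| <= 1) ->
  exists x : X, u @ U --> x.
Proof.
move=> [n [v hv]] UU u1.
have FU : Filter U := @ultra_proper _ _ UU.
have [C [C0 HC]] := fd_coord v.
have Hc : forall k, exists c : 'I_n -> R,
    u k = \sum_(i < n) c i *: v i /\ forall i, `|c i| <= C.
  move=> k; have [c0 e0] := hv (u k); have [c' [e H]] := HC c0.
  exists c'; split; first by rewrite e.
  by move=> i; apply: le_trans (H i) _; rewrite -e0 ler_piMr.
have [c Hc'] := choice Hc.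
have Hl : forall i, exists l : R, (fun k => c k i) @ U --> l.
  by move=> i; apply: (ultra_lim (M := C) UU) => k; case: (Hc' k).
have [l Hl'] := choice Hl.
exists (\sum_(i < n) l i *: v i).
have -> : u = (fun k => \sum_(i < n) c k i *: v i).
  by apply: funext => k; case: (Hc' k).
exact: (cvg_sumI FU (fun i => cvgZ (Hl' i) (cvg_cst (v i)))).
Qed.

Lemma unit_lim (Y : normedModType R) (U : set_system nat) (z : nat -> Y) (y : Y) :
  UltraFilter U -> \oo `<=` U -> (forall n, `|z n| <= 1) ->
  (forall n, 1 - n.+1%:R^-1 < `|z n|) -> z @ U --> y -> `|y| = 1.
Proof.
move=> UU sU zle Tx Hy.
have PU : ProperFilter U := @ultra_proper _ _ UU.
have FU : Filter U := PU.
apply/le_anti/andP; split.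
  have := lim_le PU (@cvg_norm _ _ _ _ FU _ _ Hy) (M := 1); rewrite normr_id.
  by apply => n; rewrite normr_id; exact: zle.
rewrite leNgt; apply/negP => ylt.
pose c := (1 - `|y|) / 2.
have c0 : 0 < c by rewrite /c divr_gt0 // subr_gt0.
have hc : c * 2 = 1 - `|y| by rewrite /c divfK // pnatr_eq0.
have := @cvg_norm _ _ _ _ FU _ _ Hy; move=> /cvgrPdist_lt /(_ _ c0) H1.
have H2 : U (fun n => n.+1%:R^-1 < c) := sU _ (eventually_inv_lt c0).
have [n [h1 h2]] := filter_ex (filterI H1 H2).
move: h1; rewrite ltr_norml => /andP [h1 h1'].
have aux : forall a b cc i : R, i < cc -> cc * 2 = 1 - b -> 1 - i < a ->
  - cc < b - a -> False by move=> a b cc i; lra.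
exact: aux h2 hc (Tx n) h1.
Qed.

Lemma part2 (X Y : normedModType R) (T : X -> Y) (eps : R) :
  finite_dim X -> bounded_op T -> opnorm T = 1 -> 0 < eps -> seqQ T eps.
Proof.
move=> fX hT nT e0 x x1 Tx.
have x1' : forall n, `|x n| <= 1 by move=> n; rewrite x1.
have [U [UU sU _]] := @exists_ultra setT (fun N => ex_intro _ N (conj (leqnn N) I)).
have PU : ProperFilter U := @ultra_proper _ _ UU.
have FU : Filter U := PU.
have [xl Hxl] := fd_ulim fX UU x1'.
have Txle : forall n, `|T (x n)| <= 1.
  by move=> n; rewrite -nT -(mulr1 (opnorm T)) -(x1 n); exact: opnorm_bound.
have HT : (fun n => T (x n)) @ U --> T xl.
  exact: (continuous_cvg _ (@bo_cont _ _ _ hT xl) Hxl).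
have nTl : `|T xl| = 1 := unit_lim UU sU Txle Tx HT.
have nxl : `|xl| = 1.
  have := lim_le PU (@cvg_norm _ _ _ _ FU _ _ Hxl) (M := 1); rewrite normr_id.
  move=> /(_ (fun n => ltac:(by rewrite normr_id x1))) le1.
  apply/le_anti; rewrite le1 /=.
  by rewrite -nTl -[`|xl|]mul1r -nT; apply: opnorm_bound.
move: Hxl => /cvgrPdist_lt /(_ _ e0) /filter_ex [n Hn].
by exists xl; split => //; exists n.
Qed.
End Aux.

Theorem theorem2p5 (R : realType) :
  (forall (X Y : completeNormedModType R),
      reflexive_space X -> kadets_klee X -> dim_gt1 X -> dim_gt1 Y ->
      forall (T : X -> Y), compact_op T -> opnorm T = 1 ->
      forall eps : R, 0 < eps -> uniform_BPB_approx T T eps) /\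
  (forall (X Y : completeNormedModType R),
      finite_dim X -> finite_dim Y -> dim_gt1 X -> dim_gt1 Y ->
      forall (T : X -> Y), bounded_op T -> opnorm T = 1 ->
      forall eps : R, 0 < eps -> exists A : X -> Y, uniform_BPB_approx T A eps).
Proof.
split.
- move=> X Y Xr Xkk _ _ T Tc nT eps e0.
  apply: BPB_reduce => //; first exact: Tc.1.
  exact: part1.
- move=> X Y fX _ _ _ T hT nT eps e0; exists T.
  apply: BPB_reduce => //; exact: part2.
Qed.
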